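(* Let $(\mathcal{T},q)$ be an interaction-free OMQ with $\mathcal{T}$ a DL-Lite$_\mathcal{R}$ TBox and $q$ a Boolean CQ, let $\mathcal{A}$ be an ABox consistent with $\mathcal{T}$, and let $x$ be a shared variable of $q$ (a variable occurring in at least two distinct atoms of $q$). Then for every homomorphism $h:q\to\mathcal{C}_{\mathcal{A},\mathcal{T}}$ we have $h(x)\in\mathrm{const}(\mathcal{A})$.
   Context: DL-Lite$_\mathcal{R}$ TBoxes contain inclusions $B\sqsubseteq C$, $R\sqsubseteq S$ with $B::=A\mid\exists R$, $C::=B\mid\neg B$, $R$ a role ($r$ or $r^-$), $S::=R\mid\neg R$. An ABox $\mathcal{A}$ is a finite set of assertions $A(c)$, $r(b,c)$; $\mathrm{const}(\mathcal{A})$ is its set of individuals. For a consistent KB $(\mathcal{A},\mathcal{T})$, the canonical model $\mathcal{C}_{\mathcal{A},\mathcal{T}}$ has domain all words $aR_1\cdots R_n$ ($n\ge0$, $a\in\mathrm{const}(\mathcal{A})$, $R_i$ roles) such that if $n\ge1$ then $(\mathcal{A},\mathcal{T})\models\exists R_1(a)$ and there is no $b\in\mathrm{const}(\mathcal{A})$ with $(\mathcal{A},\mathcal{T})\models R_1(a,b)$, and for $1\le i<n$, $\mathcal{T}\models\exists R_i^-\sqsubseteq\exists R_{i+1}$ and $R_i^-\neq R_{i+1}$; it interprets $a$ as $a$, $A$ as the individuals $a$ with $(\mathcal{A},\mathcal{T})\models A(a)$ plus words $aR_1\cdots R_n$ ($n\ge1$) with $\mathcal{T}\models\exists R_n^-\sqsubseteq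 A$, and $r$ as the pairs $(a,b)$ with $r(a,b)\in\mathcal{A}$, plus $(w,wR')$ with $\mathcal{T}\models R'\sqsubseteq r$, plus $(wR',w)$ with $\mathcal{T}\models R'\sqsubseteq r^-$. Elements outside $\mathrm{const}(\mathcal{A})$ are anonymous. Let $\circledast$ be a special symbol and $C^\circledast=C\cup\{\circledast\}$. For an atom $\alpha$ and $\mu:\mathrm{vars}(\alpha)\to\mathrm{const}(\mathcal{A})^\circledast$, write $(\mathcal{A},\mathcal{T})\models_\mu\alpha$ if there is a homomorphism $h:\alpha\to\mathcal{C}_{\mathcal{A},\mathcal{T}}$ with $h(x)=\mu(x)$ when $\mu(x)\in\mathrm{const}(\mathcal{A})$ and $h(x)$ anonymous when $\mu(x)=\circledast$. $(\mathcal{T},q)$ is interaction-free if for every assertion $f$, all atoms $\alpha,\beta$ of $q$ and all $\mu_\alpha:\mathrm{vars}(\alpha)\to\mathrm{const}(f)^\circledast$, $\mu_\beta:\mathrm{vars}(\beta)\to\mathrm{const}(f)^\circledast$, if $(\{f\},\mathcal{T})\models_{\mu_\alpha}\alpha$ and $(\{f\},\mathcal{T})\models_{\mu_\beta}\beta$ then $(\alpha,\mu_\alpha)=(\beta,\mu_\beta)$. Homomorphisms from $q$ map constants to themselves. *)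

(* Defs.v *)
From Stdlib Require Import List.
Import ListNotations.
Set Implicit Arguments.

Inductive role : Type := RN (r : nat) | RInv (r : nat).
Definition rinv (R : role) : role :=
  match R with RN r => RInv r | RInv r => RN r end.

Inductive basic : Type := BA (A : nat) | BEx (R : role).
Inductive gconcept : Type := CPos (B : basic) | CNeg (B : basic).
Inductive grole : Type := SPos (R : role) | SNeg (R : role).

Inductive axiom : Type :=
  | CI (B : basic) (C : gconcept)
  | RI (R : role) (Sg : grole).
Definition tbox := list axiom.

Inductive assertion : Type :=
  | AC (A : nat) (c : nat)
  | AR (r : nat) (b c : nat).
Definition abox := list assertion.

Definition assert_consts (f : assertion) : list nat :=
  match f with AC _ c => [c] | AR _ b c => [b; c] end.
Definition const_in (a : nat) (Ab : abox) : Prop :=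
  exists f, In f Ab /\ In a (assert_consts f).

Record interp (D : Type) := Interp {
  cI : nat -> D -> Prop;
  rI : nat -> D -> D -> Prop;
  iI : nat -> D }.

Definition role_int D (I : interp D) (R : role) (x y : D) : Prop :=
  match R with RN r => rI I r x y | RInv r => rI I r y x end.
Definition basic_int D (I : interp D) (B : basic) (x : D) : Prop :=
  match B with BA A => cI I A x | BEx R => exists y, role_int I R x y end.
Definition gconcept_int D (I : interp D) (C : gconcept) (x : D) : Prop :=
  match C with CPos B => basic_int I B x | CNeg B => ~ basic_int I B x end.
Definition grole_int D (I : interp D) (Sg : grole) (x y : D) : Prop :=
  match Sg with SPos R => role_int I R x y | SNeg R => ~ role_int I R x y end.

Definition sat_axiom D (I : interp D) (ax : axiom) : Prop :=
  match ax with
  | CI B C => forall x, basic_int I B x -> gconcept_int I C x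
  | RI R Sg => forall x y, role_int I R x y -> grole_int I Sg x y
  end.
Definition model_T D (I : interp D) (T : tbox) : Prop :=
  forall ax, In ax T -> sat_axiom I ax.
Definition sat_assertion D (I : interp D) (f : assertion) : Prop :=
  match f with
  | AC A c => cI I A (iI I c)
  | AR r b c => rI I r (iI I b) (iI I c)
  end.
Definition model_A D (I : interp D) (Ab : abox) : Prop :=
  forall f, In f Ab -> sat_assertion I f.

Definition consistent (Ab : abox) (T : tbox) : Prop :=
  exists (D : Type) (I : interp D), model_A I Ab /\ model_T I T.

Definition tbox_entails (T : tbox) (ax : axiom) : Prop :=
  forall (D : Type) (I : interp D), model_T I T -> sat_axiom I ax.
Definition kb_conc (Ab : abox) (T : tbox) (A : nat) (a : nat) : Prop :=
  forall (D : Type) (I : interp D), model_A I Ab -> model_T I T -> cI I A (iI I a).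
Definition kb_ex (Ab : abox) (T : tbox) (R : role) (a : nat) : Prop :=
  forall (D : Type) (I : interp D), model_A I Ab -> model_T I T ->
    exists y, role_int I R (iI I a) y.
Definition kb_role (Ab : abox) (T : tbox) (R : role) (a b : nat) : Prop :=
  forall (D : Type) (I : interp D), model_A I Ab -> model_T I T ->
    role_int I R (iI I a) (iI I b).

(* Canonical model C_{A,T}.  The word a R1 ... Rn is represented as (a, [R1;...;Rn]). *)
Definition elem : Type := (nat * list role)%type.

Fixpoint chain (T : tbox) (rs : list role) : Prop :=
  match rs with
  | R1 :: ((R2 :: _) as rest) =>
      tbox_entails T (CI (BEx (rinv R1)) (CPos (BEx R2))) /\ rinv R1 <> R2 /\ chain T rest
  | _ => True
  end.

Definition cm_dom (Ab : abox) (T : tbox) (e : elem) : Prop :=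
  const_in (fst e) Ab /\
  match snd e with
  | [] => True
  | R1 :: _ =>
      kb_ex Ab T R1 (fst e) /\
      (forall b, const_in b Ab -> ~ kb_role Ab T R1 (fst e) b) /\
      chain T (snd e)
  end.

Definition cm_conc (Ab : abox) (T : tbox) (A : nat) (e : elem) : Prop :=
  cm_dom Ab T e /\
  ((snd e = [] /\ kb_conc Ab T A (fst e)) \/
   (exists w R, snd e = w ++ [R] /\ tbox_entails T (CI (BEx (rinv R)) (CPos (BA A))))).

Definition cm_role (Ab : abox) (T : tbox) (r : nat) (e1 e2 : elem) : Prop :=
  cm_dom Ab T e1 /\ cm_dom Ab T e2 /\
  ((snd e1 = [] /\ snd e2 = [] /\ In (AR r (fst e1) (fst e2)) Ab) \/
   (exists R', fst e2 = fst e1 /\ snd e2 = snd e1 ++ [R'] /\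
               tbox_entails T (RI R' (SPos (RN r)))) \/
   (exists R', fst e1 = fst e2 /\ snd e1 = snd e2 ++ [R'] /\
               tbox_entails T (RI R' (SPos (RInv r))))).

Definition cm_named (Ab : abox) (e : elem) : Prop := snd e = [] /\ const_in (fst e) Ab.
Definition anonymous (e : elem) : Prop := snd e <> [].

Inductive term : Type := TVar (x : nat) | TConst (c : nat).
Inductive atom : Type :=
  | QA (A : nat) (t : term)
  | QR (r : nat) (t1 t2 : term).
Definition cq := list atom.   (* Boolean CQ: set (list) of atoms, all variables existential *)

Definition term_vars (t : term) : list nat :=
  match t with TVar x => [x] | TConst _ => [] end.
Definition atom_vars (a : atom) : list nat :=
  match a with QA _ t => term_vars t | QR _ t1 t2 => term_vars t1 ++ term_vars t2 end.

Definition eval_term (h : nat -> elem) (t : term) : elem :=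
  match t with TVar x => h x | TConst c => (c, []) end.
Definition cm_atom (Ab : abox) (T : tbox) (h : nat -> elem) (a : atom) : Prop :=
  match a with
  | QA A t => cm_conc Ab T A (eval_term h t)
  | QR r t1 t2 => cm_role Ab T r (eval_term h t1) (eval_term h t2)
  end.
Definition cm_hom (Ab : abox) (T : tbox) (q : cq) (h : nat -> elem) : Prop :=
  forall a, In a q -> cm_atom Ab T h a.

Definition shared_var (q : cq) (x : nat) : Prop :=
  exists a b, In a q /\ In b q /\ a <> b /\ In x (atom_vars a) /\ In x (atom_vars b).

(* μ : vars(α) -> const(f)^⊛, with None standing for ⊛ (values outside vars(α) irrelevant) *)
Definition mu_ok (f : assertion) (a : atom) (mu : nat -> option nat) : Prop :=
  forall x, In x (atom_vars a) ->
    match mu x with Some c => In c (assert_consts f) | None => True end.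

Definition sat_mu (Ab : abox) (T : tbox) (a : atom) (mu : nat -> option nat) : Prop :=
  exists h : nat -> elem, cm_atom Ab T h a /\
    forall x, In x (atom_vars a) ->
      match mu x with Some c => h x = (c, []) | None => anonymous (h x) end.

Definition interaction_free (T : tbox) (q : cq) : Prop :=
  forall (f : assertion) (a b : atom) (mua mub : nat -> option nat),
    In a q -> In b q -> mu_ok f a mua -> mu_ok f b mub ->
    sat_mu [f] T a mua -> sat_mu [f] T b mub ->
    a = b /\ (forall x, In x (atom_vars a) -> mua x = mub x).

(* Main.v *)
Require Import Defs.
From Stdlib Require Import List.
From Stdlib Require Import ClassicalEpsilon PeanoNat.
Import ListNotations.

Definition ent (T : tbox) (S S' : role) := tbox_entails T (RI S (SPos S')).

Lemma ent_refl T S : ent T S S.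
Proof. intros D I _ x y H; exact H. Qed.

Lemma ent_trans T S1 S2 S3 : ent T S1 S2 -> ent T S2 S3 -> ent T S1 S3.
Proof. intros H1 H2 D I HT x y H. apply (H2 D I HT). apply (H1 D I HT). exact H. Qed.

Lemma role_int_rinv D (I : interp D) S x y : role_int I (rinv S) x y <-> role_int I S y x.
Proof. destruct S; simpl; tauto. Qed.

Lemma ent_inv T S S' : ent T S S' -> ent T (rinv S) (rinv S').
Proof.
  intros H D I HT x y Hr. simpl. apply (proj2 (role_int_rinv D I S' x y)).
  apply (proj1 (role_int_rinv D I S x y)) in Hr.
  exact (H D I HT y x Hr).
Qed.

Definition gm {D} (d0 : D) (u : option D) := match u with Some y => y | None => d0 end.

Definition iN {D} (I0 : interp D) (a c : nat) : option D :=
  if Nat.eq_dec c a then None else Some (iI I0 c).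

Lemma iN_eq {D} (I0 : interp D) a : iN I0 a a = None.
Proof. unfold iN; destruct (Nat.eq_dec a a); congruence. Qed.
Lemma iN_neq {D} (I0 : interp D) a c : c <> a -> iN I0 a c = Some (iI I0 c).
Proof. unfold iN; destruct (Nat.eq_dec c a); congruence. Qed.
Lemma iN_None {D} (I0 : interp D) a c : iN I0 a c = None -> c = a.
Proof. unfold iN; destruct (Nat.eq_dec c a); congruence. Qed.
Lemma gm_iN {D} (I0 : interp D) a c : gm (iI I0 a) (iN I0 a c) = iI I0 c.
Proof. unfold iN; destruct (Nat.eq_dec c a); simpl; congruence. Qed.

Definition wit {D} (I0 : interp D) (a : nat) (S : role) : D :=
  epsilon (inhabits (iI I0 a)) (fun y => role_int I0 S (iI I0 a) y).

Definition seed {D} (Ab : abox) (T : tbox) (I0 : interp D) (a : nat) (S : role) (u v : option D) : Prop :=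
  u = None /\ (
   (exists r0 b, In (AR r0 a b) Ab /\ S = RN r0 /\ v = iN I0 a b) \/
   (exists r0 b, In (AR r0 b a) Ab /\ S = RInv r0 /\ v = iN I0 a b) \/
   (exists f, In f Ab /\ In a (assert_consts f) /\ kb_ex [f] T S a /\ v = Some (wit I0 a S))).

Definition rN {D} Ab T (I0 : interp D) a (r : nat) (u v : option D) : Prop :=
  match u, v with
  | Some x, Some y => rI I0 r x y
  | _, _ => exists S, (seed Ab T I0 a S u v /\ ent T S (RN r)) \/
                      (seed Ab T I0 a S v u /\ ent T S (RInv r))
  end.

Definition cN {D} Ab T (I0 : interp D) a (A : nat) (u : option D) : Prop :=
  match u with
  | Some y => cI I0 A y
  | None => exists f, In f Ab /\ In a (assert_consts f) /\ kb_conc [f] T A a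
  end.

Definition NI {D} Ab T (I0 : interp D) a : interp (option D) :=
  @Interp (option D) (cN Ab T I0 a) (rN Ab T I0 a) (iN I0 a).

Lemma role_char {D} Ab T (I0 : interp D) a S' u v :
  (u = None \/ v = None) ->
  (role_int (NI Ab T I0 a) S' u v <->
   exists S, (seed Ab T I0 a S u v /\ ent T S S') \/ (seed Ab T I0 a S v u /\ ent T S (rinv S'))).
Proof.
  intros Hn.
  assert (E : forall r u v, (u = None \/ v = None) -> rI (NI Ab T I0 a) r u v <->
     exists S, (seed Ab T I0 a S u v /\ ent T S (RN r)) \/
               (seed Ab T I0 a S v u /\ ent T S (RInv r))).
  { intros r u0 v0 [->| ->]; simpl; [tauto|destruct u0; tauto]. }
  destruct S' as [r|r]; cbn [role_int rinv].
  - apply E; auto.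
  - rewrite E by tauto. split; intros [S [H|H]]; exists S; tauto.
Qed.

Lemma role_both {D} Ab T (I0 : interp D) a S x y :
  role_int (NI Ab T I0 a) S (Some x) (Some y) <-> role_int I0 S x y.
Proof. destruct S; simpl; tauto. Qed.

Lemma modelA_single D (I : interp D) Ab f : In f Ab -> model_A I Ab -> model_A I [f].
Proof. intros Hf HA g [<-|[]]; apply HA; auto. Qed.

Lemma seed_hom {D} Ab T (I0 : interp D) a S u v :
  model_A I0 Ab -> model_T I0 T ->
  seed Ab T I0 a S u v -> role_int I0 S (gm (iI I0 a) u) (gm (iI I0 a) v).
Proof.
  intros HA HT [-> [[r0 [b [Hin [-> ->]]]] | [[r0 [b [Hin [-> ->]]]] | [f [Hf [Ha [Hk ->]]]]]]];
    simpl; try rewrite gm_iN.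
  - exact (HA _ Hin).
  - exact (HA _ Hin).
  - unfold wit. apply epsilon_spec. apply Hk; auto. apply modelA_single with Ab; auto.
Qed.

Lemma role_hom {D} Ab T (I0 : interp D) a S u v :
  model_A I0 Ab -> model_T I0 T ->
  role_int (NI Ab T I0 a) S u v -> role_int I0 S (gm (iI I0 a) u) (gm (iI I0 a) v).
Proof.
  intros HA HT H.
  destruct u as [x|]; [destruct v as [y|]|].
  - apply role_both in H. exact H.
  - apply role_char in H; auto. destruct H as [S0 [[Hs He]|[Hs He]]].
    + apply (He _ _ HT). apply seed_hom with Ab T; auto.
    + apply role_int_rinv. apply (He _ _ HT). apply seed_hom with Ab T; auto.
  - apply role_char in H; auto. destruct H as [S0 [[Hs He]|[Hs He]]].
    + apply (He _ _ HT). apply seed_hom with Ab T; auto.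
    + apply role_int_rinv. apply (He _ _ HT). apply seed_hom with Ab T; auto.
Qed.

Lemma basic_hom {D} Ab T (I0 : interp D) a B u :
  model_A I0 Ab -> model_T I0 T ->
  basic_int (NI Ab T I0 a) B u -> basic_int I0 B (gm (iI I0 a) u).
Proof.
  intros HA HT H. destruct B as [A|S]; simpl in *.
  - destruct u as [y|]; simpl in *; auto.
    destruct H as [f [Hf [Ha Hk]]]. apply Hk; auto. apply modelA_single with Ab; auto.
  - destruct H as [y Hy]. exists (gm (iI I0 a) y). apply role_hom with Ab T; auto.
Qed.

Lemma basic_some {D} Ab T (I0 : interp D) a B y :
  basic_int I0 B y -> basic_int (NI Ab T I0 a) B (Some y).
Proof.
  destruct B as [A|S]; simpl; auto.
  intros [z Hz]. exists (Some z). apply role_both. exact Hz.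
Qed.

Lemma seed_sem {D} Ab T (I0 : interp D) a S v :
  seed Ab T I0 a S None v ->
  exists f, In f Ab /\ In a (assert_consts f) /\
    forall D' (I : interp D'), model_A I [f] -> model_T I T ->
      exists y, role_int I S (iI I a) y /\ (v = None -> y = iI I a).
Proof.
  intros [_ [[r0 [b [Hin [-> ->]]]] | [[r0 [b [Hin [-> ->]]]] | [f [Hf [Ha [Hk ->]]]]]]].
  - exists (AR r0 a b). split; [auto|split; [simpl; auto|]].
    intros D' I HA HT. exists (iI I b). split.
    + exact (HA _ (or_introl eq_refl)).
    + intros E. apply iN_None in E. subst; auto.
  - exists (AR r0 b a). split; [auto|split; [simpl; auto|]].
    intros D' I HA HT. exists (iI I b). split.
    + exact (HA _ (or_introl eq_refl)).
    + intros E. apply iN_None in E. subst; auto.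
  - exists f. split; [auto|split; [auto|]].
    intros D' I HA HT. destruct (Hk D' I HA HT) as [y Hy]. exists y. split; auto.
    discriminate.
Qed.

Lemma star_type {D} Ab T (I0 : interp D) a B :
  basic_int (NI Ab T I0 a) B None ->
  exists f, In f Ab /\ In a (assert_consts f) /\
    forall D' (I : interp D'), model_A I [f] -> model_T I T -> basic_int I B (iI I a).
Proof.
  destruct B as [A|S']; simpl.
  - intros [f [Hf [Ha Hk]]]. exists f; auto.
  - intros [v Hv]. apply role_char in Hv; auto.
    destruct Hv as [S0 [[Hs He]|[Hs He]]].
    + destruct (seed_sem _ _ _ _ _ _ Hs) as [f [Hf [Ha Hk]]].
      exists f. split; auto. split; auto. intros D' I HA HT.
      destruct (Hk D' I HA HT) as [y [Hy _]]. exists y. exact (He _ _ HT _ _ Hy).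
    + assert (v = None) by (destruct Hs; auto). subst v.
      destruct (seed_sem _ _ _ _ _ _ Hs) as [f [Hf [Ha Hk]]].
      exists f. split; auto. split; auto. intros D' I HA HT.
      destruct (Hk D' I HA HT) as [y [Hy Hy2]]. rewrite Hy2 in Hy by auto.
      exists (iI I a). apply role_int_rinv. exact (He _ _ HT _ _ Hy).
Qed.

Lemma NI_model_T {D} Ab T (I0 : interp D) a :
  model_A I0 Ab -> model_T I0 T -> model_T (NI Ab T I0 a) T.
Proof.
  intros HA HT ax Hax. destruct ax as [B C | S Sg]; simpl.
  - intros u Hu. destruct C as [B'|B']; simpl.
    + destruct u as [y|].
      * apply basic_some. pose proof (basic_hom _ _ _ _ _ _ HA HT Hu) as H0.
        exact (HT _ Hax y H0).
      * destruct (star_type _ _ _ _ _ Hu) as [f [Hf [Ha Hk]]].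
        destruct B' as [A|S]; simpl.
        -- exists f. split; auto. split; auto. intros D' I HA' HT'.
           exact (HT' _ Hax _ (Hk D' I HA' HT')).
        -- exists (Some (wit I0 a S)). apply role_char; auto.
           exists S. left. split; [|apply ent_refl].
           split; auto. right; right. exists f. split; auto. split; auto. split; auto.
           intros D' I HA' HT'. exact (HT' _ Hax _ (Hk D' I HA' HT')).
    + intros HB'. apply basic_hom in Hu; auto. apply basic_hom in HB'; auto.
      exact (HT _ Hax _ Hu HB').
  - intros u v Huv. destruct Sg as [S'|S']; simpl.
    + assert (HE : ent T S S') by (intros D' I HT'; exact (HT' _ Hax)).
      destruct u as [x|]; [destruct v as [y|]|].
      * apply role_both. apply role_both in Huv. exact (HT _ Hax _ _ Huv).
      * apply role_char in Huv; auto. apply role_char; auto.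
        destruct Huv as [S0 [[Hs He]|[Hs He]]]; exists S0.
        -- left; split; auto. apply ent_trans with S; auto.
        -- right; split; auto. apply ent_trans with (rinv S); auto. apply ent_inv; auto.
      * apply role_char in Huv; auto. apply role_char; auto.
        destruct Huv as [S0 [[Hs He]|[Hs He]]]; exists S0.
        -- left; split; auto. apply ent_trans with S; auto.
        -- right; split; auto. apply ent_trans with (rinv S); auto. apply ent_inv; auto.
    + intros H'. apply role_hom in Huv; auto. apply role_hom in H'; auto.
      exact (HT _ Hax _ _ Huv H').
Qed.

Lemma NI_model_A {D} Ab T (I0 : interp D) a :
  model_A I0 Ab -> model_A (NI Ab T I0 a) Ab.
Proof.
  intros HA f Hf. destruct f as [A c | r b c]; simpl.
  - destruct (Nat.eq_dec c a) as [->|Hne].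
    + rewrite iN_eq. simpl. exists (AC A a). split; auto. split; [simpl; auto|].
      intros D' I HA' _. exact (HA' _ (or_introl eq_refl)).
    + rewrite iN_neq by auto. simpl. exact (HA _ Hf).
  - destruct (Nat.eq_dec b a) as [->|Hb].
    + rewrite iN_eq. simpl. exists (RN r). left. split; [|apply ent_refl].
      split; auto. left. exists r, c. auto.
    + rewrite (iN_neq _ _ _ Hb). destruct (Nat.eq_dec c a) as [->|Hc].
      * rewrite iN_eq. simpl. exists (RInv r). right. split; [|apply ent_refl].
        split; auto. right; left. exists r, b. split; auto. split; auto.
        rewrite iN_neq; auto.
      * rewrite iN_neq by auto. simpl. exact (HA _ Hf).
Qed.

Lemma L1 Ab T R a :
  consistent Ab T -> kb_ex Ab T R a ->
  exists f, In f Ab /\ In a (assert_consts f) /\ kb_ex [f] T R a.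
Proof.
  intros [D [I0 [HA HT]]] Hk.
  destruct (Hk _ (NI Ab T I0 a) (NI_model_A _ T _ a HA) (NI_model_T _ _ _ a HA HT)) as [y Hy].
  simpl in Hy. rewrite iN_eq in Hy.
  assert (Hb : basic_int (NI Ab T I0 a) (BEx R) None) by (exists y; exact Hy).
  destruct (star_type _ _ _ _ _ Hb) as [f [Hf [Ha Hk']]].
  exists f. split; auto.
Qed.

Lemma modelA_sub D (I : interp D) Ab f : In f Ab -> model_A I Ab -> model_A I [f].
Proof. apply modelA_single. Qed.

Lemma dom_transfer Ab T f a R1 e :
  cm_dom Ab T e -> fst e = a -> (forall R r', snd e = R :: r' -> R = R1) ->
  In f Ab -> In a (assert_consts f) -> kb_ex [f] T R1 a -> cm_dom [f] T e.
Proof.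
  intros [Hc Hd] Hfst Hhead Hf Ha Hk. split.
  - rewrite Hfst. exists f. simpl; auto.
  - destruct (snd e) as [|R r'] eqn:Es; auto.
    rewrite (Hhead R r' eq_refl). rewrite (Hhead R r' eq_refl) in Hd.
    destruct Hd as [_ [Hn Hch]]. rewrite Hfst in *. split; [auto|split; auto].
    intros b [g [[<-|[]] Hb]] Hr. apply (Hn b).
    + exists f; auto.
    + intros D I HA HT. apply Hr; auto. apply modelA_sub with Ab; auto.
Qed.

Definition mu (h : nat -> elem) (y : nat) : option nat :=
  match snd (h y) with [] => Some (fst (h y)) | _ => None end.

Lemma mu_spec h y : match mu h y with Some c => h y = (c, []) | None => anonymous (h y) end.
Proof.
  unfold mu, anonymous. destruct (h y) as [c w]; simpl. destruct w; congruence.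
Qed.

Lemma head_app (R R1 : role) r' l rest : (R :: r') ++ l = R1 :: rest -> R = R1.
Proof. simpl; intros H; injection H; auto. Qed.

Lemma role_shape Ab T r e1 e2 a R1 rest :
  cm_role Ab T r e1 e2 -> (e1 = (a, R1 :: rest) \/ e2 = (a, R1 :: rest)) ->
  forall e, (e = e1 \/ e = e2) -> fst e = a /\ (forall R r', snd e = R :: r' -> R = R1).
Proof.
  intros [_ [_ Hd]] Hx e He.
  destruct e1 as [a1 w1], e2 as [a2 w2]; simpl in *.
  destruct Hd as [[Hs1 [Hs2 _]] | [[R' [Hf [Hs _]]] | [R' [Hf [Hs _]]]]].
  - subst. destruct Hx as [Hx|Hx]; injection Hx; intros; subst; discriminate.
  - subst. destruct Hx as [Hx|Hx]; injection Hx; intros; subst;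
      destruct He as [He|He]; subst; simpl; split; auto; intros R r0 Hr;
      subst; simpl in *; congruence.
  - subst. destruct Hx as [Hx|Hx]; injection Hx; intros; subst;
      destruct He as [He|He]; subst; simpl; split; auto; intros R r0 Hr;
      subst; simpl in *; congruence.
Qed.

Lemma atom_sat Ab T h al x a R1 rest f :
  cm_atom Ab T h al -> In x (atom_vars al) -> h x = (a, R1 :: rest) ->
  In f Ab -> In a (assert_consts f) -> kb_ex [f] T R1 a ->
  mu_ok f al (mu h) /\ sat_mu [f] T al (mu h).
Proof.
  intros Hc Hx E Hf Ha Hk.
  destruct al as [A t | r t1 t2]; simpl in *.
  - destruct t as [y|c]; simpl in Hx; [destruct Hx as [<-|[]]|contradiction].
    split.
    + intros z [<-|[]]. unfold mu. rewrite E. simpl. auto.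
    + exists h. split.
      * destruct Hc as [Hd Hdisj]. split.
        -- apply dom_transfer with Ab a R1; auto.
           ++ simpl; rewrite E; auto.
           ++ simpl; rewrite E; simpl; intros R r' Hr; injection Hr; auto.
        -- destruct Hdisj as [[Hs _]|Hr]; [simpl in Hs; rewrite E in Hs; discriminate|right; exact Hr].
      * intros z _. apply mu_spec.
  - assert (Hsh : forall e, (e = eval_term h t1 \/ e = eval_term h t2) ->
              fst e = a /\ (forall R r', snd e = R :: r' -> R = R1)).
    { apply role_shape with Ab T r rest; auto.
      apply in_app_or in Hx. destruct Hx as [Hx|Hx];
        [destruct t1 as [y|c]|destruct t2 as [y|c]]; simpl in Hx;
        try contradiction; destruct Hx as [<-|[]]; simpl; auto. }
    assert (Hv : forall y, In y (term_vars t1 ++ term_vars t2) ->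
              h y = eval_term h t1 \/ h y = eval_term h t2).
    { intros y Hy. apply in_app_or in Hy. destruct Hy as [Hy|Hy];
        [destruct t1 as [z|c]|destruct t2 as [z|c]]; simpl in Hy;
        try contradiction; destruct Hy as [<-|[]]; simpl; auto. }
    split.
    + intros y Hy. unfold mu. destruct (snd (h y)); auto.
      destruct (Hsh (h y) (Hv y Hy)) as [-> _]. exact Ha.
    + exists h. split.
      * destruct Hc as [D1 [D2 Hdisj]].
        destruct (Hsh _ (or_introl eq_refl)) as [F1 H1].
        destruct (Hsh _ (or_intror eq_refl)) as [F2 H2].
        split; [apply dom_transfer with Ab a R1; auto|].
        split; [apply dom_transfer with Ab a R1; auto|].
        destruct Hdisj as [[Hs1 [Hs2 _]]|Hrest]; [|right; exact Hrest].
        exfalso. apply in_app_or in Hx. destruct Hx as [Hx|Hx];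
          [destruct t1 as [y|c]|destruct t2 as [y|c]]; simpl in Hx;
          try contradiction; destruct Hx as [<-|[]]; simpl in *;
          rewrite E in *; simpl in *; discriminate.
      * intros y _. apply mu_spec.
Qed.

Lemma atom_dom Ab T h al x :
  cm_atom Ab T h al -> In x (atom_vars al) -> cm_dom Ab T (h x).
Proof.
  intros Hc Hx. destruct al as [A t | r t1 t2]; simpl in *.
  - destruct t as [y|c]; simpl in Hx; [destruct Hx as [<-|[]]|contradiction].
    destruct Hc; auto.
  - destruct Hc as [D1 [D2 _]]. apply in_app_or in Hx. destruct Hx as [Hx|Hx];
      [destruct t1 as [y|c]|destruct t2 as [y|c]]; simpl in Hx;
      try contradiction; destruct Hx as [<-|[]]; auto.
Qed.

Theorem lemma9 (T : tbox) (q : cq) (Ab : abox) :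
  interaction_free T q -> consistent Ab T ->
  forall x : nat, shared_var q x ->
  forall h : nat -> elem, cm_hom Ab T q h -> cm_named Ab (h x).
Proof.
  intros HIF Hcons x [al [be [Hal [Hbe [Hne [Hxa Hxb]]]]]] h Hh.
  pose proof (Hh al Hal) as Ca. pose proof (Hh be Hbe) as Cb.
  pose proof (atom_dom _ _ _ _ _ Ca Hxa) as Hd.
  destruct (h x) as [a w] eqn:E.
  destruct Hd as [Hconst Hw]. simpl in *.
  destruct w as [|R1 rest].
  - split; auto.
  - destruct Hw as [Hk _].
    destruct (L1 _ _ _ _ Hcons Hk) as [f [Hf [Ha Hkf]]].
    destruct (atom_sat _ _ _ _ _ _ _ _ _ Ca Hxa E Hf Ha Hkf) as [Oa Sa].
    destruct (atom_sat _ _ _ _ _ _ _ _ _ Cb Hxb E Hf Ha Hkf) as [Ob Sb].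
    destruct (HIF f al be (mu h) (mu h) Hal Hbe Oa Ob Sa Sb) as [Heq _].
    contradiction.
Qed.
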